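(* For every $n\in\mathbb{N}$, with $N=4^n$ the number of vertices, the diameter $D_n$ of $\mathcal{T}_n$ is $$D_n=\frac{2\sqrt{N}-1}{3}=\frac{2^{n+1}-1}{3}\ \text{ if } n \text{ is odd},\qquad D_n=\frac{2(\sqrt{N}-1)}{3}=\frac{2(2^{n}-1)}{3}\ \text{ if } n \text{ is even}.$$
   Context: For $n\in\mathbb{N}$ let $G_n=\mathbb{Z}_{2^n}\times\mathbb{Z}_{2^n}$ (additive group), so $|G_n|=N=4^n$. Let $S^+=\{(-1,-1),(1,0),(0,1)\}$ and $S=S^+\cup(-S^+)=\{\pm(1,0),\pm(0,1),\pm(1,1)\}$. The undirected graph $\mathcal{T}_n$ (the undirected ''arrowhead'', equivalently the undirected ''diamond'') is the Cayley graph $\Gamma(G_n,S)$: its vertex set is $G_n$ and each vertex $u$ is adjacent to $u+s$ for every $s\in S$ (arithmetic modulo $2^n$ in each coordinate). The diameter of a graph is the maximum, over all pairs of vertices, of the length of a shortest path between them. ($\mathcal{T}_0$ is a single vertex.) *)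

(* Defs.v *)
From mathcomp Require Import all_boot.
Set Implicit Arguments. Unset Strict Implicit. Unset Printing Implicit Defensive.

Definition vtx (n : nat) : finType := ('I_(2 ^ n) * 'I_(2 ^ n))%type.

Lemma modn_exp2_lt (n a : nat) : a %% 2 ^ n < 2 ^ n.
Proof. by rewrite ltn_pmod // expn_gt0. Qed.

Definition zadd (n : nat) (a : 'I_(2 ^ n)) (b : nat) : 'I_(2 ^ n) :=
  Ordinal (modn_exp2_lt n (a + b)).

Definition vadd (n : nat) (u : vtx n) (s : nat * nat) : vtx n :=
  (zadd u.1 s.1, zadd u.2 s.2).

(* S = {±(1,0), ±(0,1), ±(1,1)}, with -1 represented by 2^n - 1 (mod 2^n) *)
Definition gensS (n : nat) : seq (nat * nat) :=
  let m1 := (2 ^ n).-1 in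
  [:: (1, 0); (m1, 0); (0, 1); (0, m1); (1, 1); (m1, m1)].

Definition adjT (n : nat) (u v : vtx n) : bool :=
  has (fun s => v == vadd u s) (gensS n).

Fixpoint reach (n : nat) (k : nat) (u v : vtx n) : bool :=
  match k with
  | 0 => u == v
  | k'.+1 => reach k' u v || [exists w, adjT u w && reach k' w v]
  end.

(* A shortest path has at most #|vtx n| - 1 edges, so searching k < #|vtx n|
   suffices; the value #|vtx n| would only be returned for unreachable pairs. *)
Definition dist (n : nat) (u v : vtx n) : nat :=
  find (fun k => reach k u v) (iota 0 #|vtx n|).

Definition diameter (n : nat) : nat :=
  \max_(u : vtx n) \max_(v : vtx n) dist u v.

(* Main.v *)
From Stdlib Require Import ZArith Lia.
Require Import Defs.
From mathcomp Require Import all_boot.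
From mathcomp Require Import zify.

Definition hle (P Q k : Z) : Prop :=
  (- k <= P <= k /\ - k <= Q <= k /\ - k <= P - Q <= k)%Z.

Definition zo {n : nat} (x : 'I_(2 ^ n)) : Z := Z.of_nat (nat_of_ord x).

Definition good {n : nat} (k : nat) (u v : vtx n) : Prop :=
  exists P Q, hle P Q (Z.of_nat k) /\
    (Z.of_nat (2 ^ n) | P - (zo v.1 - zo u.1))%Z /\
    (Z.of_nat (2 ^ n) | Q - (zo v.2 - zo u.2))%Z.

Lemma modsum (a b m : nat) : a < m -> b <= m ->
  (a+b) %% m = a+b \/ (a+b) %% m + m = a + b.
Proof. move=> ha hb. case: (ltnP (a+b) m) => h. by left; rewrite modn_small.
right. rewrite -{1}(subnK h) modnDr modn_small; lia. Qed.

Lemma zadd_spec {n} (a : 'I_(2 ^ n)) (b : nat) : b <= 2 ^ n ->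
  (zo (zadd a b) = zo a + Z.of_nat b \/
   zo (zadd a b) = zo a + Z.of_nat b - Z.of_nat (2 ^ n))%Z.
Proof.
move=> hb; rewrite /zo /zadd /=.
case: (modsum _ _ _ (ltn_ord a) hb) => h; lia.
Qed.

Lemma zo_bound {n} (a : 'I_(2 ^ n)) : (0 <= zo a < Z.of_nat (2 ^ n))%Z.
Proof. rewrite /zo; have := ltn_ord a; lia. Qed.

Lemma m_pos n : (0 < 2 ^ n)%N.
Proof. by rewrite expn_gt0. Qed.

Lemma pred_Z n : Z.of_nat (2 ^ n).-1 = (Z.of_nat (2 ^ n) - 1)%Z.
Proof. have := m_pos n; lia. Qed.

Lemma stepdiv (M X Y : Z) : (M | X)%Z -> (Y = 0 \/ Y = M \/ Y = - M)%Z ->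
  (M | X + Y)%Z.
Proof.
move=> hX [->|[->|->]]; apply: Z.divide_add_r => //.
- exact: Z.divide_0_r.
- exact: Z.divide_refl.
- apply/Z.divide_opp_r; exact: Z.divide_refl.
Qed.

Lemma stepdiv' (M X Z0 : Z) : (M | X)%Z -> (Z0 - X = 0 \/ Z0 - X = M \/ Z0 - X = - M)%Z ->
  (M | Z0)%Z.
Proof. move=> h1 h2; have -> : Z0 = (X + (Z0 - X))%Z by lia. exact: stepdiv. Qed.

Lemma coord_facts {n} (a : 'I_(2 ^ n)) :
  [/\ (zo (zadd a 0) = zo a)%Z,
      (zo (zadd a 1) = zo a + 1 \/ zo (zadd a 1) = zo a + 1 - Z.of_nat (2 ^ n))%Z &
      (zo (zadd a (2 ^ n).-1) = zo a - 1 + Z.of_nat (2 ^ n) \/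
       zo (zadd a (2 ^ n).-1) = zo a - 1)%Z].
Proof.
have hm := m_pos n. have hb := zo_bound a.
have hz0 := zo_bound (zadd a 0).
have hz1 := zo_bound (zadd a 1).
have hz2 := zo_bound (zadd a (2 ^ n).-1).
have h1 : 1 <= 2 ^ n by [].
have h2 : (2 ^ n).-1 <= 2 ^ n by rewrite leq_pred.
have e0 := zadd_spec a 0 (leq0n _).
have e1 := zadd_spec a _ h1.
have e2 := zadd_spec a _ h2.
rewrite pred_Z in e2.
split; lia.
Qed.

Section Steps.
Variable n : nat.
Local Notation M := (Z.of_nat (2 ^ n)).
Variables (x x' : 'I_(2 ^ n)) (P : Z).

Lemma fw0 : (M | P - (zo x' - zo x))%Z -> (M | P - (zo x' - zo (zadd x 0)))%Z.
Proof. move=> d; have [a0 _ _] := coord_facts x; apply: (stepdiv' _ _ _ d); clear d; lia. Qed.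
Lemma fw1 : (M | P - (zo x' - zo x))%Z -> (M | (P - 1) - (zo x' - zo (zadd x 1)))%Z.
Proof. move=> d; have [_ a1 _] := coord_facts x; apply: (stepdiv' _ _ _ d); clear d; lia. Qed.
Lemma fwm : (M | P - (zo x' - zo x))%Z -> (M | (P + 1) - (zo x' - zo (zadd x (2 ^ n).-1)))%Z.
Proof. move=> d; have [_ _ am] := coord_facts x; apply: (stepdiv' _ _ _ d); clear d; lia. Qed.
Lemma bw0 : (M | P - (zo x' - zo (zadd x 0)))%Z -> (M | P - (zo x' - zo x))%Z.
Proof. move=> d; have [a0 _ _] := coord_facts x; apply: (stepdiv' _ _ _ d); clear d; lia. Qed.
Lemma bw1 : (M | P - (zo x' - zo (zadd x 1)))%Z -> (M | (P + 1) - (zo x' - zo x))%Z.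
Proof. move=> d; have [_ a1 _] := coord_facts x; apply: (stepdiv' _ _ _ d); clear d; lia. Qed.
Lemma bwm : (M | P - (zo x' - zo (zadd x (2 ^ n).-1)))%Z -> (M | (P - 1) - (zo x' - zo x))%Z.
Proof. move=> d; have [_ _ am] := coord_facts x; apply: (stepdiv' _ _ _ d); clear d; lia. Qed.
End Steps.

Lemma hle_s (P Q k : Z) (s1 s2 : Z) : hle P Q k ->
  ((s1 = 0 /\ (s2 = 1 \/ s2 = -1)) \/ (s2 = 0 /\ (s1 = 1 \/ s1 = -1)) \/ (s1 = s2 /\ (s1 = 1 \/ s1 = -1)))%Z ->
  hle (P + s1) (Q + s2) (k + 1).
Proof.
move=> h [[-> [->| ->]]|[[-> [->| ->]]|[-> [->| ->]]]]; move: h; rewrite /hle; lia.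
Qed.

Lemma sound {n} k (u v : vtx n) : reach k u v -> good k u v.
Proof.
elim: k u => [|k IH] u /=.
- move/eqP=> ->. exists 0%Z, 0%Z; split; first by rewrite /hle; lia.
  by rewrite !Z.sub_diag; split; apply: Z.divide_0_r.
- case/orP.
  + move/IH=> [P [Q [hPQ [d1 d2]]]]. exists P, Q; split => //.
    clear -hPQ; move: hPQ; rewrite /hle; lia.
  + case/existsP=> w /andP [hadj /IH [P [Q [hPQ [d1 d2]]]]].
    case: u hadj d1 d2 => x y hadj d1 d2.
    case: v IH d1 d2 => x' y' IH d1 d2.
    rewrite /good /=.
    move: hadj; rewrite /adjT /gensS /=.
    rewrite !orbF.
    case/or4P => [/eqP hw|/eqP hw|/eqP hw|/orP[/eqP hw|/orP[/eqP hw|/eqP hw]]];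
      subst w; move: d1 d2; rewrite /vadd /= => d1 d2.
    * exists (P + 1)%Z, (Q)%Z; split; [|split; [exact: bw1 d1|exact: bw0 d2]].
      have := hle_s _ _ _ 1%Z 0%Z hPQ ltac:(clear; lia); rewrite /hle; clear; lia.
    * exists (P - 1)%Z, (Q)%Z; split; [|split; [exact: bwm d1|exact: bw0 d2]].
      have := hle_s _ _ _ (-1)%Z 0%Z hPQ ltac:(clear; lia); rewrite /hle; clear; lia.
    * exists (P)%Z, (Q + 1)%Z; split; [|split; [exact: bw0 d1|exact: bw1 d2]].
      have := hle_s _ _ _ 0%Z 1%Z hPQ ltac:(clear; lia); rewrite /hle; clear; lia.
    * exists (P)%Z, (Q - 1)%Z; split; [|split; [exact: bw0 d1|exact: bwm d2]].
      have := hle_s _ _ _ 0%Z (-1)%Z hPQ ltac:(clear; lia); rewrite /hle; clear; lia.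
    * exists (P + 1)%Z, (Q + 1)%Z; split; [|split; [exact: bw1 d1|exact: bw1 d2]].
      have := hle_s _ _ _ 1%Z 1%Z hPQ ltac:(clear; lia); rewrite /hle; clear; lia.
    * exists (P - 1)%Z, (Q - 1)%Z; split; [|split; [exact: bwm d1|exact: bwm d2]].
      have := hle_s _ _ _ (-1)%Z (-1)%Z hPQ ltac:(clear; lia); rewrite /hle; clear; lia.
Qed.

Lemma mul0 (c M : Z) : (0 < M)%Z -> (- M < c * M < M)%Z -> c = 0%Z.
Proof. intros. nia. Qed.

Lemma hle_step (P Q k : Z) : (0 <= k)%Z -> hle P Q (k + 1) ->
  hle P Q k \/ hle (P - 1) Q k \/ hle (P + 1) Q k \/ hle P (Q - 1) k \/
  hle P (Q + 1) k \/ hle (P - 1) (Q - 1) k \/ hle (P + 1) (Q + 1) k.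
Proof.
unfold hle; intros hk [[h1 h2] [[h3 h4] [h5 h6]]].
destruct (Z.lt_trichotomy P 0) as [sP|[sP|sP]];
destruct (Z.lt_trichotomy Q 0) as [sQ|[sQ|sQ]].
- right; right; right; right; right; right; lia.
- right; right; left; lia.
- right; right; left; lia.
- right; right; right; right; left; lia.
- left; lia.
- right; right; right; left; lia.
- right; left; lia.
- right; left; lia.
- right; right; right; right; right; left; lia.
Qed.

Lemma zo_inj {n} (x y : 'I_(2 ^ n)) : zo x = zo y -> x = y.
Proof. rewrite /zo => h; apply: val_inj => /=; lia. Qed.

Lemma complete {n} k (u v : vtx n) P Q : hle P Q (Z.of_nat k) ->
  (Z.of_nat (2 ^ n) | P - (zo v.1 - zo u.1))%Z ->
  (Z.of_nat (2 ^ n) | Q - (zo v.2 - zo u.2))%Z -> reach k u v.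
Proof.
have hm := m_pos n.
elim: k u P Q => [|k IH] [x y] P Q /= hPQ d1 d2.
- case: v d1 d2 => x' y' /= d1 d2.
  have hP : P = 0%Z by move: hPQ; rewrite /hle; lia.
  have hQ : Q = 0%Z by move: hPQ; rewrite /hle; lia.
  subst P Q.
  have b1 := zo_bound x. have b2 := zo_bound y.
  have b3 := zo_bound x'. have b4 := zo_bound y'.
  case: d1 => c1 e1. case: d2 => c2 e2.
  have hM : (0 < Z.of_nat (2 ^ n))%Z by lia.
  have g1 : c1 = 0%Z by apply: (mul0 _ _ hM); lia.
  have g2 : c2 = 0%Z by apply: (mul0 _ _ hM); lia.
  subst c1 c2.
  have f1 : zo x = zo x' by lia.
  have f2 : zo y = zo y' by lia.
  by rewrite (zo_inj _ _ f1) (zo_inj _ _ f2).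
- case: v IH d1 d2 => x' y' IH /= d1 d2.
  have hPQ' : hle P Q (Z.of_nat k + 1) by clear -hPQ; move: hPQ; rewrite /hle; lia.
  case: (hle_step _ _ _ (Zle_0_nat k) hPQ') => [h|[h|[h|[h|[h|[h|h]]]]]].
  + by rewrite (IH (x, y) P Q h d1 d2).
  + apply/orP; right; apply/existsP; exists (vadd (x, y) (1, 0)).
    rewrite /adjT /= eqxx /=.
    apply: (IH _ _ _ h); rewrite /=; [exact: fw1 d1|exact: fw0 d2].
  + apply/orP; right; apply/existsP; exists (vadd (x, y) ((2 ^ n).-1, 0)).
    rewrite /adjT /= eqxx /= orbT.
    apply: (IH _ _ _ h); rewrite /=; [exact: fwm d1|exact: fw0 d2].
  + apply/orP; right; apply/existsP; exists (vadd (x, y) (0, 1)).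
    rewrite /adjT /= eqxx /= !orbT.
    apply: (IH _ _ _ h); rewrite /=; [exact: fw0 d1|exact: fw1 d2].
  + apply/orP; right; apply/existsP; exists (vadd (x, y) (0, (2 ^ n).-1)).
    rewrite /adjT /= eqxx /= !orbT.
    apply: (IH _ _ _ h); rewrite /=; [exact: fw0 d1|exact: fwm d2].
  + apply/orP; right; apply/existsP; exists (vadd (x, y) (1, 1)).
    rewrite /adjT /= eqxx /= !orbT.
    apply: (IH _ _ _ h); rewrite /=; [exact: fw1 d1|exact: fw1 d2].
  + apply/orP; right; apply/existsP; exists (vadd (x, y) ((2 ^ n).-1, (2 ^ n).-1)).
    rewrite /adjT /= eqxx /= !orbT.
    apply: (IH _ _ _ h); rewrite /=; [exact: fwm d1|exact: fwm d2].
Qed.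

Lemma cover (e1 e2 M D t : Z) : (- M < e1 < M)%Z -> (- M < e2 < M)%Z ->
  (0 <= t)%Z ->
  ((M = 3 * t + 1 /\ D = 2 * t) \/ (M = 3 * t + 2 /\ D = 2 * t + 1))%Z ->
  hle e1 e2 D \/ hle (e1 + M) e2 D \/ hle (e1 - M) e2 D \/
  hle e1 (e2 + M) D \/ hle (e1 + M) (e2 + M) D \/ hle (e1 - M) (e2 + M) D \/
  hle e1 (e2 - M) D \/ hle (e1 + M) (e2 - M) D \/ hle (e1 - M) (e2 - M) D.
Proof. move=> h1 h2 ht hMD.
case: (Z.le_gt_cases 0 e1) => s1; case: (Z.le_gt_cases 0 e2) => s2.
- have : hle e1 e2 D \/ hle (e1 - M) e2 D \/ hle e1 (e2 - M) D \/ hle (e1 - M) (e2 - M) D by rewrite /hle; lia.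
  tauto.
- have : hle e1 e2 D \/ hle (e1 - M) e2 D \/ hle e1 (e2 + M) D \/ hle (e1 - M) (e2 + M) D by rewrite /hle; lia.
  tauto.
- have : hle e1 e2 D \/ hle (e1 + M) e2 D \/ hle e1 (e2 - M) D \/ hle (e1 + M) (e2 - M) D by rewrite /hle; lia.
  tauto.
- have : hle e1 e2 D \/ hle (e1 + M) e2 D \/ hle e1 (e2 + M) D \/ hle (e1 + M) (e2 + M) D by rewrite /hle; lia.
  tauto.
Qed.

Lemma mulrange (c M : Z) : (0 < M)%Z -> (- 2 * M < c * M < M)%Z -> c = 0%Z \/ c = (-1)%Z.
Proof. intros. nia. Qed.

Lemma far (P Q M D t : Z) :
  ((M = 3 * t + 1 /\ D = 2 * t) \/ (M = 3 * t + 2 /\ D = 2 * t + 1))%Z ->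
  (0 <= t)%Z -> hle P Q (D - 1) -> (M | P - t)%Z -> (M | Q - D)%Z -> False.
Proof.
move=> hMD ht hPQ [c1 e1] [c2 e2].
have hM : (0 < M)%Z by lia.
have r1 : c1 = 0%Z \/ c1 = (-1)%Z by apply: (mulrange _ M) => //; move: hPQ; rewrite /hle; lia.
have r2 : c2 = 0%Z \/ c2 = (-1)%Z by apply: (mulrange _ M) => //; move: hPQ; rewrite /hle; lia.
move: hPQ; rewrite /hle.
case: r1 => ?; case: r2 => ?; subst c1 c2; lia.
Qed.

Lemma diam_eq n (t D : nat) :
  (2 ^ n = 3 * t + 1 /\ D = 2 * t) \/ (2 ^ n = 3 * t + 2 /\ D = 2 * t + 1) ->
  diameter n = D.
Proof.
move=> hD.
have hm := m_pos n.
have hMD : ((Z.of_nat (2 ^ n) = 3 * Z.of_nat t + 1 /\ Z.of_nat D = 2 * Z.of_nat t) \/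
  (Z.of_nat (2 ^ n) = 3 * Z.of_nat t + 2 /\ Z.of_nat D = 2 * Z.of_nat t + 1))%Z by lia.
have hN : #|vtx n| = 2 ^ n * 2 ^ n by rewrite card_prod card_ord.
have hDN : D < #|vtx n|.
  rewrite hN; apply: (leq_trans (_ : D < 2 ^ n)); first lia.
  by rewrite leq_pmulr.
have up : forall u v : vtx n, reach D u v.
  move=> [x y] [x' y'].
  have b1 := zo_bound x. have b2 := zo_bound y.
  have b3 := zo_bound x'. have b4 := zo_bound y'.
  have hc := cover (zo x' - zo x) (zo y' - zo y) (Z.of_nat (2 ^ n)) (Z.of_nat D) (Z.of_nat t)
    ltac:(clear -b1 b3; lia) ltac:(clear -b2 b4; lia) (Zle_0_nat t) hMD.
  clear hMD hD hN hDN b1 b2 b3 b4.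
  have d0 := Z.divide_0_r (Z.of_nat (2 ^ n)).
  case: hc => [h|[h|[h|[h|[h|[h|[h|[h|h]]]]]]]];
    (apply: (complete _ _ _ _ _ h) => /=;
     [apply: (stepdiv' _ _ _ d0); lia | apply: (stepdiv' _ _ _ d0); lia]).
have updist : forall u v : vtx n, dist u v <= D.
  move=> u v; rewrite leqNgt; apply/negP => hlt.
  have := before_find 0 hlt.
  by rewrite nth_iota // add0n up.
have ht : t < 2 ^ n by lia.
have hD' : D < 2 ^ n by lia.
pose o0 : 'I_(2 ^ n) := Ordinal hm.
pose u0 : vtx n := (o0, o0).
pose v0 : vtx n := (Ordinal ht, Ordinal hD').
have lowdist : D <= dist u0 v0.
  rewrite /dist.
  case: (ltnP (find (fun k => reach k u0 v0) (iota 0 #|vtx n|)) #|vtx n|) => hf;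
    last by apply: leq_trans hf; apply: ltnW.
  set f := find _ _ in hf *.
  have := nth_find 0 (_ : has (fun k => reach k u0 v0) (iota 0 #|vtx n|)).
  rewrite has_find size_iota => /(_ hf).
  rewrite -/f nth_iota // add0n => /sound [P [Q [hPQ [d1 d2]]]].
  rewrite leqNgt; apply/negP => hlt.
  apply: (far P Q _ _ _ hMD (Zle_0_nat t)).
  - clear -hPQ hlt; move: hPQ; rewrite /hle; lia.
  - move: d1; rewrite /u0 /v0 /o0 /zo /=.
    by rewrite Z.sub_0_r.
  - move: d2; rewrite /u0 /v0 /o0 /zo /=.
    by rewrite Z.sub_0_r.
apply/eqP; rewrite eqn_leq; apply/andP; split.
- apply/bigmax_leqP => u _; apply/bigmax_leqP => v _; exact: updist.
- apply: (leq_trans lowdist).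
  rewrite /diameter.
  apply: (bigmax_sup u0) => //; apply: (bigmax_sup v0) => //.
Qed.

Lemma mod3 n : exists t, (2 ^ n = 3 * t + 1 /\ odd n = false) \/
                        (2 ^ n = 3 * t + 2 /\ odd n = true).
Proof.
elim: n => [|n [t [[h o]|[h o]]]]; first by exists 0; left.
- exists (2 * t); right; rewrite expnS h /= o; split => //; lia.
- exists (2 * t + 1); left; rewrite expnS h /= o; split => //; lia.
Qed.

Theorem proposition1 (n : nat) :
  diameter n =
  (if odd n then (2 ^ n.+1 - 1) %/ 3 else (2 * (2 ^ n - 1)) %/ 3).
Proof.
case: (mod3 n) => t [[h o]|[h o]]; rewrite o ?expnS h.
- apply: (diam_eq n t); left; split => //; lia.
- apply: (diam_eq n t); right; split => //; lia.
Qed.
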